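(* Let $\Phi_M,\Phi_N:\mathcal{L}(\mathcal{H}_A)\to\mathcal{L}(\mathcal{H}_B)$ be two measurement channels corresponding to the $n$-outcome POVMs $M=\{M_i\}_{i=0}^{n-1}$ and $N=\{N_i\}_{i=0}^{n-1}$. The channels $\Phi_M,\Phi_N$ form a Maximal Entanglement Worst Case pair if and only if there exist a pure state $|\phi\rangle\langle\phi|\in\mathcal{L}(\mathcal{H}_A)$ and coefficients $\gamma_i\in\mathbb{C}$ such that $M_i-N_i=\gamma_i|\phi\rangle\langle\phi|$ for all $i\in\{0,\ldots,n-1\}$. Moreover, the optimal input state is then necessarily $\rho_{AA'}=|\phi\rangle\langle\phi|\otimes\tau$, where $\tau\in\mathcal{D}(\mathcal{H}_{A'})$ is an arbitrary state.
   Context: The measurement channel of a POVM $M$ is $\Phi_M(\rho)=\sum_{i=0}^{n-1}\operatorname{Tr}(\rho M_i)\,|i\rangle\langle i|$. For channel discrimination with uniform priors using an input $\rho_{AA'}$, with $d=\dim\mathcal{H}_A$, $\Delta_\Phi=\Phi_M-\Phi_N$, diamond norm $\|\mathcal{S}\|_\diamond=\max_{\rho_{AA'}}\|(\mathcal{S}\otimes I_{A'})\rho_{AA'}\|_1$ and ME-norm $\|\mathcal{S}\|_{\mathrm{ME}}=\|J(\mathcal{S})/d\|_1$ with Choi operator $J(\mathcal{S})=\sum_{ij}\mathcal{S}(|i\rangle\langle j|)\otimes|i\rangle\langle j|$, a pair is Maximal Entanglement Worst Case (MEWC) if $\|\Delta_\Phi\|_\diamond=d\|\Delta_\Phi\|_{\mathrm{ME}}$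 (the maximal possible gap; a maximally entangled input is maximally suboptimal). *)

(* Defs.v *)
From HB Require Import structures.
From mathcomp Require Import all_boot all_order all_algebra.
From mathcomp Require Import complex mxtens.
From mathcomp Require Import boolp classical_sets reals.

Set Implicit Arguments.
Unset Strict Implicit.
Unset Printing Implicit Defensive.

Import Order.TTheory GRing.Theory Num.Theory.
Local Open Scope ring_scope.
Local Open Scope classical_set_scope.

Section QDefs.
Variable R : realType.
Local Notation C := (R[i]).

Definition adjmx m n (A : 'M[C]_(m, n)) : 'M[C]_(n, m) :=
  \matrix_(i, j) (A j i)^*.

Definition psdmx m (A : 'M[C]_m) : Prop :=
  A = adjmx A /\ forall v : 'cV[C]_m, 0 <= (adjmx v *m A *m v) 0 0.

Definition densitymx m (A : 'M[C]_m) : Prop := psdmx A /\ \tr A = 1.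

Definition povm d n (M : 'I_n -> 'M[C]_d) : Prop :=
  (forall i, psdmx (M i)) /\ \sum_(i < n) M i = 1%:M.

Definition meas_channel d n (M : 'I_n -> 'M[C]_d) (rho : 'M[C]_d) : 'M[C]_n :=
  diag_mx (\row_(i < n) \tr (rho *m M i)).

(* (S (x) id_{A'}) rho for rho on H_A (x) H_A', dim H_A' = k, using
   rho = sum_{a,b} rho_{ab} (x) |a><b| *)
Definition tensI d m k (S : 'M[C]_d -> 'M[C]_m) (rho : 'M[C]_(d * k))
  : 'M[C]_(m * k) :=
  \sum_(a < k) \sum_(b < k)
     S (\matrix_(x, y) rho (mxtens_index (x, a)) (mxtens_index (y, b)))
       *t (delta_mx a b : 'M[C]_k).

(* trace norm ||X||_1 = Tr sqrt(X^* X), sqrt = the PSD square root *)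
Definition trnorm m n (X : 'M[C]_(m, n)) : R :=
  sup [set r : R | exists P : 'M[C]_n,
         psdmx P /\ P *m P = adjmx X *m X /\ \tr P = Complex r 0].

(* diamond norm, ancilla A' of the same dimension d as A *)
Definition diamond_norm d m (S : 'M[C]_d -> 'M[C]_m) : R :=
  sup [set r : R | exists rho : 'M[C]_(d * d),
         densitymx rho /\ r = trnorm (tensI S rho)].

Definition choi d m (S : 'M[C]_d -> 'M[C]_m) : 'M[C]_(m * d) :=
  \sum_(i < d) \sum_(j < d) S (delta_mx i j) *t (delta_mx i j : 'M[C]_d).

Definition me_norm d m (S : 'M[C]_d -> 'M[C]_m) : R :=
  trnorm ((d%:R)^-1 *: choi S).

Definition delta_channel d n (M N : 'I_n -> 'M[C]_d) (rho : 'M[C]_d)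
  : 'M[C]_n := meas_channel M rho - meas_channel N rho.

Definition MEWC d n (M N : 'I_n -> 'M[C]_d) : Prop :=
  diamond_norm (delta_channel M N) = d%:R * me_norm (delta_channel M N).

End QDefs.

(* Main.v *)
Require Import Defs.
From HB Require Import structures.
From mathcomp Require Import all_boot all_order all_algebra.
From mathcomp Require Import complex mxtens.
From mathcomp Require Import boolp classical_sets reals.
From mathcomp Require Import spectral.
Import Order.TTheory GRing.Theory Num.Theory.
Local Open Scope ring_scope.

Set Implicit Arguments.
Unset Strict Implicit.
Unset Printing Implicit Defensive.

Section Lin.
Variable R : realType.
Local Notation C := (R[i]).

Lemma adjmxE m n (A : 'M[C]_(m, n)) i j : adjmx A i j = (A j i)^*.
Proof. by rewrite mxE. Qed.

Lemma adjmxK m n (A : 'M[C]_(m, n)) : adjmx (adjmx A) = A.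
Proof. by apply/matrixP=> i j; rewrite !mxE conjCK. Qed.

Lemma adjmxM m n p (A : 'M[C]_(m, n)) (B : 'M[C]_(n, p)) :
  adjmx (A *m B) = adjmx B *m adjmx A.
Proof.
apply/matrixP=> i j; rewrite !mxE rmorph_sum; apply: eq_bigr=> k _.
by rewrite !mxE rmorphM mulrC.
Qed.

Lemma adjmxD m n (A B : 'M[C]_(m, n)) : adjmx (A + B) = adjmx A + adjmx B.
Proof. by apply/matrixP=> i j; rewrite !mxE rmorphD. Qed.

Lemma adjmxN m n (A : 'M[C]_(m, n)) : adjmx (- A) = - adjmx A.
Proof. by apply/matrixP=> i j; rewrite !mxE rmorphN. Qed.

Lemma adjmxB m n (A B : 'M[C]_(m, n)) : adjmx (A - B) = adjmx A - adjmx B.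
Proof. by rewrite adjmxD adjmxN. Qed.

Lemma adjmxZ m n (a : C) (A : 'M[C]_(m, n)) : adjmx (a *: A) = a^* *: adjmx A.
Proof. by apply/matrixP=> i j; rewrite !mxE rmorphM. Qed.

Lemma adjmx_sum m n (I : finType) (F : I -> 'M[C]_(m, n)) :
  adjmx (\sum_i F i) = \sum_i adjmx (F i).
Proof.
apply/matrixP=> i j; rewrite mxE !summxE rmorph_sum; apply: eq_bigr=> k _.
by rewrite !mxE.
Qed.

Lemma adjmx_scalar n (a : C) : adjmx (a%:M : 'M[C]_n) = (a^*)%:M.
Proof. by apply/matrixP=> i j; rewrite !mxE eq_sym; case: eqP; rewrite ?rmorph0 ?mulr1n. Qed.

Lemma adjmx1 n : adjmx (1%:M : 'M[C]_n) = 1%:M.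
Proof. by rewrite adjmx_scalar conjC1. Qed.

Lemma adjmx_diag n (h : 'rV[C]_n) : adjmx (diag_mx h) = diag_mx (map_mx Num.conj h).
Proof. by apply/matrixP=> i j; rewrite !mxE eq_sym; case: eqP=> [->|]; rewrite ?rmorph0 ?mulr1n ?mulr0n. Qed.

Lemma adjmx_delta m n (i : 'I_m) (j : 'I_n) : adjmx (delta_mx i j : 'M[C]_(m,n)) = delta_mx j i.
Proof. by apply/matrixP=> a b; rewrite !mxE andbC; case: andP; rewrite ?rmorph0 ?rmorph1. Qed.

Lemma adjmx_tr n (A : 'M[C]_n) : \tr (adjmx A) = (\tr A)^*.
Proof. by rewrite /mxtrace rmorph_sum; apply: eq_bigr=> i _; rewrite mxE. Qed.

Lemma adjmx_trmx m n (A : 'M[C]_(m,n)) : adjmx (A^T) = (adjmx A)^T.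
Proof. by apply/matrixP=> i j; rewrite !mxE. Qed.

Definition qf n (A : 'M[C]_n) (v : 'cV[C]_n) : C := (adjmx v *m A *m v) 0 0.

Lemma qfE n (A : 'M[C]_n) v : qf A v = \sum_i \sum_j (v i 0)^* * A i j * v j 0.
Proof.
rewrite exchange_big /qf mxE; apply: eq_bigr=> j _; rewrite mxE mulr_suml.
by apply: eq_bigr=> i _; rewrite !mxE.
Qed.

Lemma psd_qf n (A : 'M[C]_n) v : psdmx A -> 0 <= qf A v.
Proof. by move=> [_ h]; apply: h. Qed.

Lemma psd_herm n (A : 'M[C]_n) : psdmx A -> adjmx A = A.
Proof. by move=> [h _]; rewrite -h. Qed.

Lemma psdP n (A : 'M[C]_n) : adjmx A = A -> (forall v, 0 <= qf A v) -> psdmx A.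
Proof. by move=> h1 h2; split=> //; rewrite h1. Qed.

Lemma psd_conj m n (A : 'M[C]_(m,n)) (X : 'M[C]_n) : psdmx X ->
  psdmx (A *m X *m adjmx A).
Proof.
move=> pX; apply: psdP.
  by rewrite !adjmxM adjmxK (psd_herm pX) mulmxA.
move=> v; rewrite /qf.
have -> : adjmx v *m (A *m X *m adjmx A) *m v = adjmx (adjmx A *m v) *m X *m (adjmx A *m v).
  by rewrite adjmxM adjmxK !mulmxA.
exact: psd_qf.
Qed.

Lemma qf_delta n (A : 'M[C]_n) k : qf A (delta_mx k 0) = A k k.
Proof.
by rewrite /qf adjmx_delta -rowE -colE !mxE.
Qed.

Lemma psd_diag n (A : 'M[C]_n) k : psdmx A -> 0 <= A k k.
Proof. by move=> pA; rewrite -qf_delta; apply: psd_qf. Qed.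

Lemma psd_tr_ge0 n (A : 'M[C]_n) : psdmx A -> 0 <= \tr A.
Proof. by move=> pA; apply: sumr_ge0=> k _; apply: psd_diag. Qed.

Lemma psdD n (A B : 'M[C]_n) : psdmx A -> psdmx B -> psdmx (A + B).
Proof.
move=> pA pB; apply: psdP; first by rewrite adjmxD !psd_herm.
by move=> v; rewrite /qf mulmxDr mulmxDl mxE addr_ge0 //; apply: psd_qf.
Qed.

Lemma psd0 n : psdmx (0 : 'M[C]_n).
Proof.
apply: psdP; first by apply/matrixP=> i j; rewrite !mxE rmorph0.
by move=> v; rewrite /qf mulmx0 mul0mx mxE.
Qed.

Lemma psd_sum n (I : finType) (F : I -> 'M[C]_n) : (forall i, psdmx (F i)) -> psdmx (\sum_i F i).
Proof.
move=> h; elim/big_ind: _ => //; [exact: psd0| by move=> ? ?; apply: psdD].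
Qed.

Lemma psdZ n (a : C) (A : 'M[C]_n) : 0 <= a -> psdmx A -> psdmx (a *: A).
Proof.
move=> a0 pA; apply: psdP; first by rewrite adjmxZ psd_herm // conj_Creal // ger0_real.
by move=> v; rewrite /qf -scalemxAr -scalemxAl mxE mulr_ge0 //; apply: psd_qf.
Qed.

Lemma psd_outer n (w : 'cV[C]_n) : psdmx (w *m adjmx w).
Proof.
apply: psdP; first by rewrite adjmxM adjmxK.
move=> v; rewrite /qf.
have -> : adjmx v *m (w *m adjmx w) *m v = adjmx v *m w *m adjmx (adjmx v *m w).
  by rewrite adjmxM adjmxK !mulmxA.
rewrite mxE big_ord1 [adjmx _ 0 0]mxE.
by rewrite -normCK exprn_ge0.
Qed.


Lemma adjmx_tc n (A : 'M[C]_n) : adjmx A = map_mx Num.conj A^T.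
Proof. by apply/matrixP=> i j; rewrite !mxE. Qed.

Definition spU n (H : 'M[C]_n) := spectralmx H.
Definition spD n (H : 'M[C]_n) := spectral_diag H.

Lemma herm_decomp n (H : 'M[C]_n) : adjmx H = H ->
  [/\ spU H *m adjmx (spU H) = 1%:M, adjmx (spU H) *m spU H = 1%:M,
      H = adjmx (spU H) *m diag_mx (spD H) *m spU H &
      forall k, (spD H 0 k)^* = spD H 0 k].
Proof.
move=> hH.
have nH : H \is normalmx by apply/normalmxP; rewrite -!adjmx_tc hH.
have uU : spU H \is unitarymx by apply: spectral_unitarymx.
have eU : invmx (spU H) = adjmx (spU H) by rewrite invmx_unitary // adjmx_tc.
have e1 : spU H *m adjmx (spU H) = 1%:M by rewrite adjmx_tc; apply/unitarymxP.
have e2 : adjmx (spU H) *m spU H = 1%:M.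
  by rewrite -eU mulVmx // unitarymx_unit.
have e3 : H = adjmx (spU H) *m diag_mx (spD H) *m spU H.
  by rewrite -eU; apply/orthomx_spectralP.
split=> // k.
set U := spU H in e1 e2 e3 *; set D := spD H in e3 *.
have eD : U *m H *m adjmx U = diag_mx D.
  by rewrite e3 !mulmxA e1 mul1mx -mulmxA e1 mulmx1.
have : adjmx (diag_mx (spD H)) = diag_mx (spD H).
  by rewrite -eD !adjmxM adjmxK hH mulmxA.
by rewrite adjmx_diag => /matrixP /(_ k k); rewrite !mxE eqxx !mulr1n.
Qed.

Lemma qf_diag n (h : 'rV[C]_n) w : qf (diag_mx h) w = \sum_k h 0 k * `|w k 0| ^+ 2.
Proof.
rewrite /qf -mulmxA mul_diag_mx mxE; apply: eq_bigr=> k _.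
by rewrite !mxE normCK mulrC mulrA.
Qed.

Lemma qf_udiag n (U : 'M[C]_n) h v :
  qf (adjmx U *m diag_mx h *m U) v = qf (diag_mx h) (U *m v).
Proof. by rewrite /qf adjmxM !mulmxA. Qed.

Lemma psd_udiag n (U : 'M[C]_n) (h : 'rV[C]_n) : (forall k, 0 <= h 0 k) ->
  psdmx (adjmx U *m diag_mx h *m U).
Proof.
move=> h0; apply: psdP.
  rewrite !adjmxM adjmxK mulmxA adjmx_diag; congr (_ *m _ *m _).
  by apply/matrixP=> i j; rewrite !mxE conj_Creal // ger0_real.
move=> v; rewrite qf_udiag qf_diag; apply: sumr_ge0=> k _.
by rewrite mulr_ge0 // exprn_ge0.
Qed.

Lemma psd_decomp n (P : 'M[C]_n) : psdmx P -> forall k, 0 <= spD P 0 k.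
Proof.
move=> pP k; have [e1 e2 e3 _] := herm_decomp (psd_herm pP).
have := psd_diag k (psd_conj (spU P) pP).
set U := spU P in e1 e2 e3 *; set D := spD P in e3 *.
have eD : U *m P *m adjmx U = diag_mx D.
  by rewrite e3 !mulmxA e1 mul1mx -mulmxA e1 mulmx1.
by rewrite eD mxE eqxx mulr1n.
Qed.

Lemma psd_qf0 n (P : 'M[C]_n) v : psdmx P -> qf P v = 0 -> P *m v = 0.
Proof.
move=> pP; have [e1 e2 e3 _] := herm_decomp (psd_herm pP).
have h0 := psd_decomp pP.
set U := spU P in e1 e2 e3 h0 *; set D := spD P in e3 h0 *.
rewrite e3 qf_udiag qf_diag => /psumr_eq0P h.
have {}h : forall k, D 0 k * (U *m v) k 0 = 0.
  move=> k; have := h (fun i _ => mulr_ge0 (h0 i) (exprn_ge0 2 (normr_ge0 _))) k isT.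
  rewrite normCK => /eqP; rewrite !mulf_eq0 => /orP[/eqP->|/orP[]/eqP hk].
  - by rewrite mul0r.
  - by rewrite hk mulr0.
  - by move: hk => /eqP; rewrite conjC_eq0 => /eqP->; rewrite mulr0.
rewrite -!mulmxA mul_diag_mx.
have -> : (\matrix_(i, j) (D 0 i * (U *m v) i j)) = 0.
  by apply/matrixP=> i j; rewrite [LHS]mxE [RHS]mxE ord1 h.
by rewrite mulmx0.
Qed.

Lemma psd1 n : psdmx (1%:M : 'M[C]_n).
Proof.
apply: psdP; first exact: adjmx1.
move=> w; rewrite /qf mulmx1 mxE; apply: sumr_ge0=> k _.
by rewrite mxE mulrC -normCK exprn_ge0.
Qed.

Lemma cV_norm0 n (w : 'cV[C]_n) : (adjmx w *m w) 0 0 = 0 -> w = 0.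
Proof.
move=> h; rewrite -(mul1mx w); apply: psd_qf0; first exact: psd1.
by rewrite /qf mulmx1.
Qed.

Lemma diag_delta n (h : 'rV[C]_n) k : diag_mx h *m (delta_mx k 0 : 'cV[C]_n) = h 0 k *: delta_mx k 0.
Proof.
apply/matrixP=> i j; rewrite mul_diag_mx !mxE.
by case: (i =P k) => [->|_] //=; rewrite !mulr0.
Qed.

Lemma psd_sqrt_uniq n (P Q : 'M[C]_n) : psdmx P -> psdmx Q -> P *m P = Q *m Q -> P = Q.
Proof.
move=> pP pQ ePQ.
have hH : adjmx (P - Q) = P - Q by rewrite adjmxB !psd_herm.
have [e1 e2 e3 e4] := herm_decomp hH.
set H := P - Q in hH e1 e2 e3 e4 *.
set U := spU H in e1 e2 e3 *; set D := spD H in e3 e4 *.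
suff D0 : forall k, D 0 k = 0.
  apply/subr0_eq; rewrite -/H e3.
  have -> : diag_mx D = 0 by apply/matrixP=> i j; rewrite !mxE D0 mul0rn.
  by rewrite mulmx0 mul0mx.
move=> k; set v := adjmx U *m (delta_mx k 0 : 'cV[C]_n).
have Hv : H *m v = D 0 k *: v.
  by rewrite /v e3 -!mulmxA (mulmxA U) e1 mul1mx diag_delta -scalemxAr.
have vH : adjmx v *m H = D 0 k *: adjmx v.
  by rewrite -{1}hH -adjmxM Hv adjmxZ e4.
have vv : (adjmx v *m v) 0 0 = 1.
  by rewrite /v adjmxM adjmxK adjmx_delta mulmxA -(mulmxA _ U) e1 mulmx1 mul_delta_mx mxE !eqxx.
have key : D 0 k * (qf P v + qf Q v) = 0.
  have : qf (P *m P - Q *m Q) v = 0 by rewrite ePQ subrr /qf mulmx0 mul0mx mxE.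
  have -> : P *m P - Q *m Q = P *m H + H *m Q.
    by rewrite /H mulmxBr mulmxBl addrA subrK.
  rewrite /qf mulmxDr mulmxDl mxE.
  rewrite -!mulmxA Hv (mulmxA (adjmx v) H) vH -scalemxAr -scalemxAr -scalemxAl !mxE.
  by rewrite mulrDr.
apply/eqP; move: key => /eqP; rewrite mulf_eq0 => /orP[//|].
rewrite paddr_eq0 ?psd_qf // => /andP[/eqP qP /eqP qQ].
have : H *m v = 0 by rewrite /H mulmxBl (psd_qf0 pP qP) (psd_qf0 pQ qQ) subrr.
rewrite Hv => /eqP; rewrite scalemx_eq0 => /orP[//|/eqP v0].
by move: vv; rewrite v0 mulmx0 mxE => /eqP; rewrite eq_sym oner_eq0.
Qed.

Lemma trnormE m n (X : 'M[C]_(m,n)) (P : 'M[C]_n) : psdmx P ->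
  P *m P = adjmx X *m X -> \tr P = Complex (trnorm X) 0.
Proof.
move=> pP eP; have := psd_tr_ge0 pP.
case E: (\tr P) => [a b]; rewrite lecE /= => /andP[/eqP b0 _].
rewrite b0 in E *; rewrite /trnorm.
have -> : [set r : R | exists P0 : 'M[C]_n, psdmx P0 /\ P0 *m P0 = adjmx X *m X /\
            \tr P0 = Complex r 0]%classic = [set a]%classic.
  apply/seteqP; split=> r /=.
    move=> [P0 [pP0 [eP0 tP0]]].
    have eq0 : P0 = P by apply: psd_sqrt_uniq=> //; rewrite eP0 eP.
    by move: tP0; rewrite eq0 E => -[].
  by move=> ->; exists P.
by rewrite sup1.
Qed.

Definition habs n (H : 'M[C]_n) :=
  adjmx (spU H) *m diag_mx (map_mx (fun z : C => `|z|) (spD H)) *m spU H.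

Lemma tr_udiag n (X U : 'M[C]_n) h :
  \tr (X *m (adjmx U *m diag_mx h *m U)) = \sum_k (U *m X *m adjmx U) k k * h 0 k.
Proof.
rewrite mulmxA mxtrace_mulC !mulmxA mul_mx_diag /mxtrace.
by apply: eq_bigr=> k _; rewrite mxE.
Qed.

Section Habs.
Variables (n : nat) (H : 'M[C]_n).
Hypothesis hH : adjmx H = H.

Lemma habs_psd : psdmx (habs H).
Proof. by apply: psd_udiag=> k; rewrite mxE normr_ge0. Qed.

Lemma habs_sq : habs H *m habs H = adjmx H *m H.
Proof.
have [e1 e2 e3 e4] := herm_decomp hH; rewrite /habs.
set U := spU H in e1 e2 e3 *; set D := spD H in e3 e4 *.
rewrite hH e3 !mulmxA -(mulmxA _ U) e1 mulmx1 -(mulmxA _ U (adjmx U)) e1 mulmx1.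
rewrite -!(mulmxA (adjmx U)) !mulmx_diag; congr (_ *m (diag_mx _ *m _)).
apply/rowP=> k; rewrite !mxE -expr2 -[RHS]expr2 real_normK //.
by rewrite CrealE e4.
Qed.

Lemma habs_tr : \tr (habs H) = \sum_k `|spD H 0 k|.
Proof.
have [e1 _ _ _] := herm_decomp hH.
rewrite /habs mxtrace_mulC mulmxA e1 mul1mx mxtrace_diag.
by apply: eq_bigr=> k _; rewrite mxE.
Qed.

Lemma spD_entry k : spD H 0 k = (spU H *m H *m adjmx (spU H)) k k.
Proof.
have [e1 e2 e3 e4] := herm_decomp hH.
set U := spU H in e1 e2 e3 *; set D := spD H in e3 e4 *.
by rewrite e3 !mulmxA e1 mul1mx -mulmxA e1 mulmx1 mxE eqxx mulr1n.
Qed.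

Lemma tr_abs_bound (X : 'M[C]_n) : psdmx X -> `|\tr (X *m H)| <= \tr (X *m habs H).
Proof.
move=> pX; have [e1 e2 e3 e4] := herm_decomp hH.
rewrite {1}e3 /habs !tr_udiag.
apply: le_trans (ler_norm_sum _ _ _) _; apply: ler_sum=> k _.
rewrite normrM [in X in _ <= _ * X]mxE ger0_norm //.
by apply: psd_diag; apply: psd_conj.
Qed.

End Habs.

Lemma sum_index n d (F : 'I_(n * d) -> C) :
  \sum_p F p = \sum_i \sum_a F (mxtens_index (i, a)).
Proof.
rewrite pair_big /= (reindex (@mxtens_index n d)) /=; first by apply: eq_bigr=> -[].
by exists (@mxtens_unindex n d)=> p _; rewrite (mxtens_indexK, mxtens_unindexK).
Qed.

Definition bd n d (B : 'I_n -> 'M[C]_d) : 'M[C]_(n * d) :=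
  \matrix_(p, q) (((mxtens_unindex p).1 == (mxtens_unindex q).1)%:R *
     B (mxtens_unindex p).1 (mxtens_unindex p).2 (mxtens_unindex q).2).

Section BD.
Variables (n d : nat).

Lemma bdE (B : 'I_n -> 'M[C]_d) i a j b :
  bd B (mxtens_index (i, a)) (mxtens_index (j, b)) = (i == j)%:R * B i a b.
Proof. by rewrite mxE !mxtens_indexK. Qed.

Lemma bd_mul (A B : 'I_n -> 'M[C]_d) : bd A *m bd B = bd (fun i => A i *m B i).
Proof.
apply/matrixP=> p q; case: (mxtens_indexP p)=> i a; case: (mxtens_indexP q)=> j b.
rewrite [RHS]bdE [in RHS]mxE [LHS]mxE sum_index (bigD1 i) //= [X in _ + X]big1 => [|k ki]; last first.
  by apply: big1=> c _; rewrite !bdE eq_sym (negPf ki) !mul0r.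
rewrite addr0 mulr_sumr; apply: eq_bigr=> c _; rewrite !bdE eqxx mul1r.
by case: (i =P j)=> [->|_]; rewrite ?mul0r ?mulr0 ?mul1r.
Qed.

Lemma bd_adj (B : 'I_n -> 'M[C]_d) : adjmx (bd B) = bd (fun i => adjmx (B i)).
Proof.
apply/matrixP=> p q; case: (mxtens_indexP p)=> i a; case: (mxtens_indexP q)=> j b.
rewrite mxE !bdE rmorphM eq_sym mxE.
by case: (i =P j)=> [->|_]; rewrite ?rmorph0 ?rmorph1 ?mul0r ?mul1r.
Qed.

Lemma bd_tr (B : 'I_n -> 'M[C]_d) : \tr (bd B) = \sum_i \tr (B i).
Proof.
rewrite /mxtrace sum_index; apply: eq_bigr=> i _; apply: eq_bigr=> a _.
by rewrite bdE eqxx mul1r.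
Qed.

Lemma bd_scale (c : C) (B : 'I_n -> 'M[C]_d) : c *: bd B = bd (fun i => c *: B i).
Proof.
apply/matrixP=> p q; case: (mxtens_indexP p)=> i a; case: (mxtens_indexP q)=> j b.
by rewrite mxE !bdE mxE mulrCA.
Qed.

Lemma qf_bd (B : 'I_n -> 'M[C]_d) v :
  qf (bd B) v = \sum_i qf (B i) (\col_a v (mxtens_index (i, a)) 0).
Proof.
rewrite qfE sum_index; apply: eq_bigr=> i _; rewrite [RHS]qfE; apply: eq_bigr=> a _.
rewrite sum_index (bigD1 i) //= [X in _ + X]big1 => [|k ki]; last first.
  by apply: big1=> c _; rewrite bdE eq_sym (negPf ki) mul0r mulr0 mul0r.
rewrite addr0; apply: eq_bigr=> c _; rewrite bdE eqxx mul1r !mxE.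
by [].
Qed.

Lemma bd_psd (B : 'I_n -> 'M[C]_d) : (forall i, psdmx (B i)) -> psdmx (bd B).
Proof.
move=> pB; apply: psdP.
  by rewrite bd_adj; congr bd; apply: funext=> i; rewrite psd_herm.
by move=> v; rewrite qf_bd; apply: sumr_ge0=> i _; apply: psd_qf.
Qed.

Lemma trnorm_bd (B P : 'I_n -> 'M[C]_d) :
  (forall i, psdmx (P i) /\ P i *m P i = adjmx (B i) *m B i) ->
  Complex (trnorm (bd B)) 0 = \sum_i \tr (P i).
Proof.
move=> hP; rewrite -(trnormE (P := bd P)).
- by rewrite bd_tr.
- by apply: bd_psd=> i; case: (hP i).
rewrite bd_mul bd_adj bd_mul; congr bd; apply: funext=> i; by case: (hP i).
Qed.

End BD.

Lemma psd_tr m (A : 'M[C]_m) : psdmx A -> psdmx A^T.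
Proof.
move=> pA; apply: psdP; first by rewrite adjmx_trmx psd_herm.
move=> v; have := psd_qf (map_mx Num.conj v) pA; rewrite !qfE exchange_big.
move=> /le_trans; apply; rewrite le_eqVlt; apply/orP; left; apply/eqP; apply: eq_bigr=> i _; apply: eq_bigr=> j _.
by rewrite !mxE conjCK mulrC [_ * A j i]mulrC mulrA.
Qed.

Lemma complexM (x y : R) : Complex (x * y) 0 = Complex x 0 * Complex y 0.
Proof. by apply/eqP; rewrite eq_complex /= !mulr0 !mul0r subr0 addr0 !eqxx. Qed.

Lemma complexN (k : nat) : Complex (k%:R : R) 0 = k%:R.
Proof. exact: (rmorph_nat (real_complex R) k). Qed.

Lemma tr_delta n (i j : 'I_n) (A : 'M[C]_n) : \tr (delta_mx i j *m A) = A j i.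
Proof.
rewrite /mxtrace (bigD1 i) //= big1 => [|x xi]; last first.
  by rewrite mxE big1 // => y _; rewrite mxE (negPf xi) mul0r.
rewrite addr0 mxE (bigD1 j) //= big1 => [|y yj]; last by rewrite mxE (negPf yj) andbF mul0r.
by rewrite addr0 mxE !eqxx mul1r.
Qed.

Lemma tr_mulE n (X D : 'M[C]_n) : \tr (X *m D) = \sum_x \sum_y X x y * D y x.
Proof. by apply: eq_bigr=> x _; rewrite mxE. Qed.

Lemma mulmx3E m p (A : 'M[C]_(m, p)) (X : 'M[C]_p) (B : 'M[C]_(m, p)) u v :
  (A *m X *m adjmx B) u v = \sum_q \sum_q' A u q * X q q' * (B v q')^*.
Proof.
rewrite mxE exchange_big; apply: eq_bigr=> q' _; rewrite mxE mulr_suml.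
by apply: eq_bigr=> q _; rewrite !mxE.
Qed.

End Lin.

Section Prob.
Variable R : realType.
Local Notation C := (R[i]).
Variables (d n : nat) (M N : 'I_n -> 'M[C]_d).

Definition Dm i := M i - N i.

Definition blk (rho : 'M[C]_(d * d)) a b : 'M[C]_d :=
  \matrix_(x, y) rho (mxtens_index (x, a)) (mxtens_index (y, b)).

Lemma delta_channelE X i j :
  delta_channel M N X i j = (i == j)%:R * \tr (X *m Dm i).
Proof.
rewrite /delta_channel /meas_channel !mxE /Dm mulmxBr raddfB /=.
by rewrite mulrBr !mulr_natl.
Qed.

Definition Bm (rho : 'M[C]_(d * d)) i : 'M[C]_d := \matrix_(a, b) \tr (blk rho a b *m Dm i).

Lemma sum2_delta (F : 'I_d -> 'I_d -> C) a b :
  \sum_a' \sum_b' F a' b' * ((a == a') && (b == b'))%:R = F a b.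
Proof.
rewrite (bigD1 a) //= [X in _ + X]big1 => [|a' a'a]; last first.
  by apply: big1=> b' _; rewrite eq_sym (negPf a'a) mulr0.
rewrite addr0 (bigD1 b) //= [X in _ + X]big1 => [|b' b'b]; last by rewrite eq_sym (negPf b'b) andbF mulr0.
by rewrite !eqxx mulr1 addr0.
Qed.

Lemma tensI_delta rho : tensI (delta_channel M N) rho = bd (Bm rho).
Proof.
apply/matrixP=> p q; case: (mxtens_indexP p)=> i a; case: (mxtens_indexP q)=> j b.
rewrite bdE /tensI !summxE.
under eq_bigr => a' _ do rewrite summxE; under eq_bigr => a' _ do under eq_bigr => b' _ do rewrite tensmxE [delta_mx _ _ _ _]mxE.
by rewrite sum2_delta delta_channelE mxE.
Qed.

Lemma choi_delta : choi (delta_channel M N) = bd (fun k => (Dm k)^T).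
Proof.
apply/matrixP=> p q; case: (mxtens_indexP p)=> k i; case: (mxtens_indexP q)=> l j.
rewrite bdE /choi !summxE.
under eq_bigr => a' _ do rewrite summxE; under eq_bigr => a' _ do under eq_bigr => b' _ do rewrite tensmxE [delta_mx _ _ _ _]mxE.
by rewrite sum2_delta delta_channelE tr_delta [_^T _ _]mxE.
Qed.

Lemma sum_dl (F : 'I_d -> C) a : \sum_c (c == a)%:R * F c = F a.
Proof.
rewrite (bigD1 a) //= [X in _ + X]big1 => [|c ca]; last by rewrite (negPf ca) mul0r.
by rewrite eqxx mul1r addr0.
Qed.

Definition Wsys (phi : 'cV[C]_d) : 'M[C]_(d, d * d) :=
  \matrix_(a, p) (((mxtens_unindex p).2 == a)%:R * (phi (mxtens_unindex p).1 0)^*).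
Definition Wanc (q : 'cV[C]_d) : 'M[C]_(d, d * d) :=
  \matrix_(x, p) (((mxtens_unindex p).1 == x)%:R * (q (mxtens_unindex p).2 0)^*).

Lemma WsysE phi a x b : Wsys phi a (mxtens_index (x, b)) = (b == a)%:R * (phi x 0)^*.
Proof. by rewrite mxE mxtens_indexK. Qed.
Lemma WancE q x y b : Wanc q x (mxtens_index (y, b)) = (y == x)%:R * (q b 0)^*.
Proof. by rewrite mxE mxtens_indexK. Qed.

Lemma WsysM k phi (X : 'M[C]_(d * d, k)) a j :
  (Wsys phi *m X) a j = \sum_x (phi x 0)^* * X (mxtens_index (x, a)) j.
Proof.
rewrite mxE sum_index; apply: eq_bigr=> x _.
under eq_bigr => c _ do rewrite WsysE -mulrA.
by rewrite sum_dl.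
Qed.

Lemma MWsys k phi (X : 'M[C]_(k, d * d)) i b :
  (X *m adjmx (Wsys phi)) i b = \sum_y X i (mxtens_index (y, b)) * phi y 0.
Proof.
rewrite mxE sum_index; apply: eq_bigr=> y _.
under eq_bigr => c _ do rewrite adjmxE WsysE rmorphM /= rmorph_nat conjCK mulrCA.
by rewrite sum_dl.
Qed.

Lemma WancM k q (X : 'M[C]_(d * d, k)) x j :
  (Wanc q *m X) x j = \sum_a (q a 0)^* * X (mxtens_index (x, a)) j.
Proof.
rewrite mxE sum_index (bigD1 x) //= [X in _ + X]big1 => [|y yx]; last first.
  by apply: big1=> a _; rewrite WancE (negPf yx) !mul0r.
by rewrite addr0; apply: eq_bigr=> a _; rewrite WancE eqxx mul1r.
Qed.

Lemma MWanc k q (X : 'M[C]_(k, d * d)) i y :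
  (X *m adjmx (Wanc q)) i y = \sum_b X i (mxtens_index (y, b)) * q b 0.
Proof.
rewrite mxE sum_index (bigD1 y) //= [X in _ + X]big1 => [|z zy]; last first.
  by apply: big1=> a _; rewrite adjmxE WancE (negPf zy) mul0r rmorph0 mulr0.
by rewrite addr0; apply: eq_bigr=> a _; rewrite adjmxE WancE eqxx mul1r conjCK.
Qed.

Lemma Wsys_red phi rho a b :
  (Wsys phi *m rho *m adjmx (Wsys phi)) a b = qf (blk rho a b) phi.
Proof.
rewrite MWsys qfE [RHS]exchange_big; apply: eq_bigr=> y _; rewrite WsysM mulr_suml.
by apply: eq_bigr=> x _; rewrite mxE.
Qed.

Lemma Wanc_red q rho :
  Wanc q *m rho *m adjmx (Wanc q) = \sum_a \sum_b ((q a 0)^* * q b 0) *: blk rho a b.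
Proof.
apply/matrixP=> x y; rewrite MWanc summxE.
under [RHS]eq_bigr => a _ do rewrite summxE.
rewrite [RHS]exchange_big; apply: eq_bigr=> b _.
rewrite WancM mulr_suml; apply: eq_bigr=> a _.
by rewrite !mxE mulrAC.
Qed.

Lemma Wsys_unit phi : adjmx phi *m phi = 1%:M -> Wsys phi *m adjmx (Wsys phi) = 1%:M.
Proof.
move=> h; apply/matrixP=> a b; rewrite MWsys.
under eq_bigr => y _ do rewrite WsysE -mulrA.
rewrite -mulr_sumr.
have -> : \sum_y (phi y 0)^* * phi y 0 = 1.
  have e : (adjmx phi *m phi) 0 0 = 1 by rewrite h mxE eqxx.
  by rewrite -e mxE; apply: eq_bigr=> y _; rewrite adjmxE.
by rewrite mulr1 !mxE eq_sym.
Qed.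

Lemma Wsys_proj phi : adjmx (Wsys phi) *m Wsys phi = (phi *m adjmx phi) *t 1%:M.
Proof.
apply/matrixP=> p p'; case: (mxtens_indexP p)=> x a; case: (mxtens_indexP p')=> y b.
rewrite tensmxE mxE.
under eq_bigr => c _ do rewrite adjmxE !WsysE rmorphM /= rmorph_nat conjCK.
rewrite (bigD1 a) //= [X in _ + X]big1 => [|c ca]; last by rewrite eq_sym (negPf ca) mul0r mul0r.
rewrite addr0 !mxE big_ord1 !mxE eqxx mul1r.
by rewrite eq_sym mulrCA mulrC.
Qed.

Lemma Wsys_tens phi (tau : 'M[C]_d) :
  adjmx (Wsys phi) *m tau *m Wsys phi = (phi *m adjmx phi) *t tau.
Proof.
apply/matrixP=> p p'; case: (mxtens_indexP p)=> x a; case: (mxtens_indexP p')=> y b.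
rewrite tensmxE -{2}(adjmxK (Wsys phi)) mulmx3E.
under eq_bigr => c _ do under eq_bigr => e _ do rewrite !adjmxE !WsysE !rmorphM /= !rmorph_nat !conjCK.
rewrite (bigD1 a) //= [X in _ + X]big1 => [|c ca]; last first.
  by apply: big1=> e _; rewrite eq_sym (negPf ca) !mul0r.
rewrite addr0 (bigD1 b) //= [X in _ + X]big1 => [|e eb]; last first.
  by rewrite eq_sym (negPf eb) !mul0r mulr0.
rewrite addr0 !eqxx !mul1r mxE big_ord1 !mxE.
by rewrite mulrAC.
Qed.


Hypothesis hD : forall i, adjmx (Dm i) = Dm i.
Hypothesis hd : (0 < d)%N.

Lemma me_val : Complex (d%:R * me_norm (delta_channel M N)) 0 = \sum_k \tr (habs (Dm k)).
Proof.
have d0 : (d%:R : R) != 0 by rewrite pnatr_eq0 -lt0n.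
have dC : (d%:R : C) != 0 by rewrite pnatr_eq0 -lt0n.
rewrite complexM complexN /me_norm choi_delta bd_scale.
rewrite (@trnorm_bd _ _ _ _ (fun k => d%:R^-1 *: (habs (Dm k))^T)).
  rewrite mulr_sumr; apply: eq_bigr=> k _.
  by rewrite mxtraceZ mxtrace_tr mulrA mulfV // mul1r.
move=> k; split.
  apply: psdZ; first by rewrite invr_ge0 ler0n.
  by apply: psd_tr; apply: habs_psd.
rewrite adjmxZ adjmx_trmx hD -!scalemxAl -!scalemxAr !scalerA.
rewrite conj_Creal; last by rewrite realV realn.
by rewrite -!trmx_mul habs_sq hD.
Qed.

Definition sig (rho : 'M[C]_(d * d)) := \sum_a blk rho a a.
Definition Km := \sum_i habs (Dm i).
Definition qU (U : 'M[C]_d) k : 'cV[C]_d := \col_a (U k a)^*.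
Definition rk (U : 'M[C]_d) k rho := Wanc (qU U k) *m rho *m adjmx (Wanc (qU U k)).

Lemma rkE U k rho : rk U k rho = \sum_a \sum_b (U k a * (U k b)^*) *: blk rho a b.
Proof.
rewrite /rk Wanc_red; apply: eq_bigr=> a _; apply: eq_bigr=> b _.
by rewrite !mxE conjCK.
Qed.

Lemma sig_decomp U rho : adjmx U *m U = 1%:M -> sig rho = \sum_k rk U k rho.
Proof.
move=> eU.
under eq_bigr => k _ do rewrite rkE.
rewrite exchange_big /sig; apply: eq_bigr=> a _.
rewrite exchange_big (bigD1 a) //= [X in _ + X]big1 => [|b ba]; last first.
  rewrite -scaler_suml.
  have -> : \sum_k U k a * (U k b)^* = 0.
    have := congr1 (fun A : 'M[C]_d => A b a) eU; rewrite mxE [RHS]mxE (negPf ba) mulr0n => e.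
    by apply: eq_trans e; apply: eq_bigr=> k _; rewrite adjmxE mulrC.
  by rewrite scale0r.
rewrite addr0 -scaler_suml.
have -> : \sum_k U k a * (U k a)^* = 1.
  have := congr1 (fun A : 'M[C]_d => A a a) eU; rewrite mxE [RHS]mxE eqxx mulr1n => e.
  by apply: eq_trans e; apply: eq_bigr=> k _; rewrite adjmxE mulrC.
by rewrite scale1r.
Qed.

Lemma rk_psd U k rho : psdmx rho -> psdmx (rk U k rho).
Proof. by move=> p; apply: psd_conj. Qed.

Lemma sig_psd rho : psdmx rho -> psdmx (sig rho).
Proof.
move=> p; rewrite (@sig_decomp 1%:M); last by rewrite adjmx1 mulmx1.
by apply: psd_sum=> k; apply: rk_psd.
Qed.

Lemma sig_tr rho : \tr (sig rho) = \tr rho.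
Proof.
rewrite /sig raddf_sum /= [RHS]/mxtrace sum_index exchange_big; apply: eq_bigr=> a _.
by apply: eq_bigr=> x _; rewrite mxE.
Qed.

Lemma blk_adj rho a b : adjmx rho = rho -> adjmx (blk rho a b) = blk rho b a.
Proof.
move=> h; apply/matrixP=> x y; rewrite adjmxE !mxE.
by rewrite -{2}h adjmxE.
Qed.

Lemma Bm_herm rho i : adjmx rho = rho -> adjmx (Bm rho i) = Bm rho i.
Proof.
move=> h; apply/matrixP=> a b; rewrite adjmxE !mxE -adjmx_tr adjmxM blk_adj // hD.
by rewrite mxtrace_mulC.
Qed.

Lemma tr_Bm_U U rho i k :
  (U *m Bm rho i *m adjmx U) k k = \tr (rk U k rho *m Dm i).
Proof.
rewrite mulmx3E rkE mulmx_suml raddf_sum; apply: eq_bigr=> a _.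
rewrite mulmx_suml raddf_sum; apply: eq_bigr=> b _.
by rewrite -scalemxAl /= mxtraceZ mxE mulrAC.
Qed.

Lemma bound_tr rho : densitymx rho ->
  Complex (trnorm (tensI (delta_channel M N) rho)) 0 <= \tr (sig rho *m Km).
Proof.
move=> [pr tr1]; have hr := psd_herm pr.
rewrite tensI_delta (@trnorm_bd _ _ _ _ (fun i => habs (Bm rho i))); last first.
  by move=> i; split; [apply: habs_psd; apply: Bm_herm | apply: habs_sq; apply: Bm_herm].
rewrite /Km mulmx_sumr raddf_sum /=; apply: ler_sum=> i _.
have hB := Bm_herm i hr.
have [e1 e2 e3 e4] := herm_decomp hB.
rewrite habs_tr //.
rewrite (sig_decomp _ e2) mulmx_suml raddf_sum /=; apply: ler_sum=> k _.
rewrite spD_entry // tr_Bm_U.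
by apply: tr_abs_bound; [apply: hD | apply: rk_psd].
Qed.

Lemma exists_argmax (f : 'I_d -> C) : (forall k, 0 <= f k) -> exists k0, forall k, f k <= f k0.
Proof.
move=> f0; have i0 : 'I_d := Ordinal hd.
case: (@arg_maxP _ _ _ i0 xpredT (fun k => complex.Re (f k)) isT)=> k0 _ h.
exists k0=> k; rewrite lecE (ger0_Im (f0 k)) (ger0_Im (f0 k0)) eqxx /=.
exact: h.
Qed.

Lemma Km_psd : psdmx Km.
Proof. by apply: psd_sum=> i; apply: habs_psd. Qed.

Lemma trK_bound k0 (hk0 : forall k, spD Km 0 k <= spD Km 0 k0) (s : 'M[C]_d) :
  psdmx s -> \tr s = 1 -> \tr (s *m Km) <= spD Km 0 k0.
Proof.
move=> ps ts; have [e1 e2 e3 _] := herm_decomp (psd_herm Km_psd).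
have h0 := psd_decomp Km_psd.
move: hk0; set V := spU Km in e1 e2 e3 *; set k := spD Km in e3 h0 *; move=> hk0.
rewrite e3 tr_udiag.
apply: (@le_trans _ _ (\sum_j (V *m s *m adjmx V) j j * k 0 k0)).
  apply: ler_sum=> j _; apply: ler_wpM2l=> //.
  by apply: psd_diag; apply: psd_conj.
rewrite -mulr_suml.
have -> : \sum_j (V *m s *m adjmx V) j j = \tr s.
  by rewrite -/(mxtrace _) mxtrace_mulC mulmxA e2 mul1mx.
by rewrite ts mul1r.
Qed.

Definition p00 : 'I_(d * d) := Ordinal (ltn_mul hd hd : (0 < d * d)%N).

Lemma rho0_density : densitymx (delta_mx p00 p00 : 'M[C]_(d * d)).
Proof.
set p := p00.
have -> : (delta_mx p p : 'M[C]_(d*d)) = (delta_mx p 0 : 'cV[C]_(d*d)) *m adjmx (delta_mx p 0).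
  by rewrite adjmx_delta mul_delta_mx.
split; first exact: psd_outer.
by rewrite adjmx_delta mxtrace_mulC mul_delta_mx /mxtrace big_ord1 mxE !eqxx.
Qed.

Lemma diamond_nonempty :
  ([set r : R | exists rho : 'M[C]_(d * d), densitymx rho /\
     r = trnorm (tensI (delta_channel M N) rho)] !=set0)%classic.
Proof. by eexists; exists (delta_mx p00 p00); split; [exact: rho0_density|]. Qed.

Lemma qf_sum (I : finType) m (F : I -> 'M[C]_m) v : qf (\sum_i F i) v = \sum_i qf (F i) v.
Proof. by rewrite /qf mulmx_sumr mulmx_suml summxE. Qed.

Lemma complex_real (z : C) : 0 <= z -> Complex (complex.Re z) 0 = z.
Proof. by case: z => a b; rewrite lecE /= => /andP[/eqP <- _]. Qed.

Lemma rank1_form m (D : 'M[C]_m) (u : 'cV[C]_m) : adjmx D = D ->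
  D = D *m (u *m adjmx u) -> D = qf D u *: (u *m adjmx u).
Proof.
move=> hD1 D1.
have D2 : D = u *m adjmx u *m D by rewrite -{1}hD1 {1}D1 adjmxM adjmxM adjmxK hD1.
have e : D = u *m (adjmx u *m D *m u) *m adjmx u.
  by rewrite !mulmxA -D2 -mulmxA -D1.
by rewrite {1}e [adjmx u *m D *m u]mx11_scalar mul_mx_scalar -scalemxAl.
Qed.

Lemma mewc_to : diamond_norm (delta_channel M N) = d%:R * me_norm (delta_channel M N) ->
  exists (phi : 'cV[C]_d) (gamma : 'I_n -> C),
    adjmx phi *m phi = 1%:M /\ forall i, Dm i = gamma i *: (phi *m adjmx phi).
Proof.
move=> hM.
have [e1 e2 e3 _] := herm_decomp (psd_herm Km_psd).
have h0 := psd_decomp Km_psd.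
have [k0 hk0] := exists_argmax h0.
have dle : diamond_norm (delta_channel M N) <= complex.Re (spD Km 0 k0).
  apply: ge_sup; first exact: diamond_nonempty.
  move=> r [rho [dr ->]].
  have ts : \tr (sig rho) = 1 by rewrite sig_tr; case: dr.
  have := le_trans (bound_tr dr) (trK_bound hk0 (sig_psd (proj1 dr)) ts).
  by rewrite -{1}(complex_real (h0 k0)) lecE /= => /andP[_].
have trK : Complex (diamond_norm (delta_channel M N)) 0 = \sum_k spD Km 0 k.
  rewrite hM me_val -raddf_sum /= -/Km.
  move: e1 e2 e3; set V := spU Km; set k := spD Km => e1 e2 e3.
  by rewrite {1}e3 mxtrace_mulC mulmxA e1 mul1mx mxtrace_diag.
move: e1 e2 e3 h0 hk0 dle trK; set V := spU Km; set k := spD Km => e1 e2 e3 h0 hk0 dle trK.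
have kz : forall j, j != k0 -> k 0 j = 0.
  have : \sum_(j | j != k0) k 0 j = 0.
    apply/le_anti/andP; split; last by apply: sumr_ge0.
    have : \sum_j k 0 j <= k 0 k0.
      by rewrite -trK -(complex_real (h0 k0)) lecE /= eqxx dle.
    by rewrite (bigD1 k0) //= -lerBrDl subrr.
  by move/psumr_eq0P=> h j jk; apply: h=> // i _; apply: h0.
have Dz : forall (i : 'I_n) (j : 'I_d), j != k0 -> Dm i *m (adjmx V *m (delta_mx j 0 : 'cV[C]_d)) = 0.
  move=> i j jk; set v := adjmx V *m (delta_mx j 0 : 'cV[C]_d).
  have qK : qf Km v = 0.
    by rewrite {1}e3 qf_udiag /v mulmxA e1 mul1mx qf_delta mxE eqxx mulr1n kz.
  move: qK; rewrite /Km qf_sum => /psumr_eq0P h.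
  have hv : habs (Dm i) *m v = 0.
    apply: psd_qf0; first by apply: habs_psd.
    by apply: h=> // i' _; apply: psd_qf; apply: habs_psd.
  apply: cV_norm0.
  by rewrite adjmxM -mulmxA (mulmxA (adjmx (Dm i))) -habs_sq // -mulmxA hv !mulmx0 mxE.
set u := adjmx V *m (delta_mx k0 0 : 'cV[C]_d).
have DV : forall i, Dm i *m adjmx V = Dm i *m adjmx V *m delta_mx k0 k0.
  move=> i; apply/matrixP=> x j; rewrite [RHS]mxE.
  case: (j =P k0)=> [->|/eqP jk].
    rewrite (bigD1 k0) //= [X in _ + X]big1 => [|c ck]; last by rewrite [delta_mx _ _ _ _]mxE (negPf ck) mulr0.
    by rewrite [delta_mx _ _ _ _]mxE !eqxx mulr1 addr0.
  rewrite big1 => [|c _]; last by rewrite [delta_mx _ _ _ _]mxE (negPf jk) andbF mulr0.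
  have := congr1 (fun A : 'cV[C]_d => A x 0) (Dz i j jk).
  by rewrite mulmxA -colE !mxE.
have Du : forall i, Dm i = Dm i *m (u *m adjmx u).
  move=> i; rewrite /u adjmxM adjmxK adjmx_delta -mulmxA (mulmxA (delta_mx k0 0)).
  by rewrite mul_delta_mx !mulmxA -DV -mulmxA e2 mulmx1.
have uu : adjmx u *m u = 1%:M.
  rewrite /u adjmxM adjmxK adjmx_delta -mulmxA (mulmxA V) e1 mul1mx mul_delta_mx.
  apply/matrixP=> a b; rewrite (ord1 a) (ord1 b) !mxE; exact: erefl.
exists u, (fun i => qf (Dm i) u); split=> // i.
by apply: rank1_form; [apply: hD | apply: Du].
Qed.

Lemma qf_conj m p (A : 'M[C]_(m, p)) (X : 'M[C]_p) v :
  qf (A *m X *m adjmx A) v = qf X (adjmx A *m v).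
Proof. by rewrite /qf adjmxM adjmxK !mulmxA. Qed.

Lemma cols0 m p (A : 'M[C]_(m, p)) : (forall j, A *m (delta_mx j 0 : 'cV[C]_p) = 0) -> A = 0.
Proof.
move=> h; apply/matrixP=> x j; have := congr1 (fun B : 'cV[C]_m => B x 0) (h j).
by rewrite -colE !mxE.
Qed.

Section Rank1.
Variables (phi : 'cV[C]_d) (gamma : 'I_n -> C).
Hypothesis hphi : adjmx phi *m phi = 1%:M.
Hypothesis hG : forall i, Dm i = gamma i *: (phi *m adjmx phi).

Local Notation V := (Wsys phi).
Definition Cm rho := V *m rho *m adjmx V.
Definition Gs := \sum_i `|gamma i|.

Lemma Gs_ge0 : 0 <= Gs.
Proof. by apply: sumr_ge0=> i _; apply: normr_ge0. Qed.

Lemma Bm_rank1 rho i : Bm rho i = gamma i *: Cm rho.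
Proof.
apply/matrixP=> a b; rewrite [in RHS]mxE /Cm Wsys_red [in LHS]mxE hG -scalemxAr mxtraceZ; congr (_ * _).
rewrite mulmxA mxtrace_mulC mulmxA /mxtrace big_ord1.
by [].
Qed.

Lemma Cm_psd rho : psdmx rho -> psdmx (Cm rho).
Proof. by move=> p; apply: psd_conj. Qed.

Lemma trnorm_rank1 rho : psdmx rho ->
  Complex (trnorm (tensI (delta_channel M N) rho)) 0 = Gs * \tr (Cm rho).
Proof.
move=> pr; rewrite tensI_delta (@trnorm_bd _ _ _ _ (fun i => `|gamma i| *: Cm rho)).
  by rewrite /Gs mulr_suml; apply: eq_bigr=> i _; rewrite mxtraceZ.
move=> i; split; first by apply: psdZ; [apply: normr_ge0 | apply: Cm_psd].
rewrite Bm_rank1 adjmxZ (psd_herm (Cm_psd pr)) -!scalemxAl -!scalemxAr !scalerA.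
by rewrite -expr2 normCK mulrC.
Qed.

Lemma VV : V *m adjmx V = 1%:M.
Proof. exact: Wsys_unit. Qed.

Lemma tC_le1 rho : densitymx rho -> \tr (Cm rho) <= 1.
Proof.
move=> [pr tr1]; set Q := 1%:M - adjmx V *m V.
have hQ : adjmx Q = Q by rewrite /Q adjmxB adjmx1 adjmxM adjmxK.
have QQ : Q *m Q = Q.
  rewrite /Q mulmxBl mul1mx mulmxBr mulmx1 !mulmxA -(mulmxA _ V) VV mulmx1.
  by rewrite subrr subr0.
have e : \tr rho - \tr (Cm rho) = \tr (Q *m rho *m adjmx Q).
  rewrite hQ (mxtrace_mulC (Q *m rho) Q) mulmxA QQ /Q mulmxBl mul1mx raddfB /=.
  by rewrite /Cm (mxtrace_mulC (V *m rho) (adjmx V)) mulmxA.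
have := psd_tr_ge0 (psd_conj Q pr); rewrite -e tr1 subr_ge0.
done.
Qed.

Lemma tC_eq1 rho : densitymx rho -> \tr (Cm rho) = 1 -> rho = (phi *m adjmx phi) *t Cm rho.
Proof.
move=> [pr tr1] t1; set Q := 1%:M - adjmx V *m V.
have hQ : adjmx Q = Q by rewrite /Q adjmxB adjmx1 adjmxM adjmxK.
have QQ : Q *m Q = Q.
  rewrite /Q mulmxBl mul1mx mulmxBr mulmx1 !mulmxA -(mulmxA _ V) VV mulmx1.
  by rewrite subrr subr0.
have e : \tr rho - \tr (Cm rho) = \tr (Q *m rho *m adjmx Q).
  rewrite hQ (mxtrace_mulC (Q *m rho) Q) mulmxA QQ /Q mulmxBl mul1mx raddfB /=.
  by rewrite /Cm (mxtrace_mulC (V *m rho) (adjmx V)) mulmxA.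
move: e; rewrite tr1 t1 subrr => /esym/psumr_eq0P h.
have rQ : rho *m Q = 0.
  rewrite -hQ; apply: cols0=> p; rewrite -mulmxA; apply: psd_qf0=> //.
  rewrite -qf_conj qf_delta; apply: h=> // q _.
  by apply: psd_diag; apply: psd_conj.
have r1 : rho = rho *m (adjmx V *m V).
  by apply/eqP; rewrite -subr_eq0 -{1}(mulmx1 rho) -mulmxBr -/Q rQ.
have r2 : rho = adjmx V *m V *m rho.
  by rewrite -{1}(psd_herm pr) {1}r1 adjmxM adjmxM adjmxK (psd_herm pr).
by rewrite -(Wsys_tens phi (Cm rho)) /Cm {1}r1 {1}r2 !mulmxA.
Qed.

Lemma tens_density (tau : 'M[C]_d) : densitymx tau -> densitymx ((phi *m adjmx phi) *t tau).
Proof.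
move=> [pt tt]; rewrite -(Wsys_tens phi tau); split.
  by rewrite -{2}(adjmxK V); apply: psd_conj.
by rewrite mxtrace_mulC mulmxA VV mul1mx.
Qed.

Lemma Cm_tens (tau : 'M[C]_d) : Cm ((phi *m adjmx phi) *t tau) = tau.
Proof. by rewrite -(Wsys_tens phi tau) /Cm !mulmxA VV mul1mx -mulmxA VV mulmx1. Qed.

Definition gs := complex.Re Gs.

Lemma diamond_rank1 : diamond_norm (delta_channel M N) = gs.
Proof.
have eG : Complex gs 0 = Gs by apply: complex_real; apply: Gs_ge0.
have ub : ubound [set r : R | exists rho : 'M[C]_(d * d), densitymx rho /\
     r = trnorm (tensI (delta_channel M N) rho)]%classic gs.
  move=> r [rho [dr ->]].
  have : Complex (trnorm (tensI (delta_channel M N) rho)) 0 <= Complex gs 0.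
    rewrite trnorm_rank1; last by case: dr.
    rewrite eG -{2}(mulr1 Gs); apply: ler_wpM2l; first exact: Gs_ge0.
    exact: tC_le1.
  by rewrite lecE /= => /andP[_].
apply/le_anti/andP; split; first by apply: ge_sup=> //; apply: diamond_nonempty.
have i0 : 'I_d := Ordinal hd.
have dt : densitymx (delta_mx i0 i0 : 'M[C]_d).
  have -> : (delta_mx i0 i0 : 'M[C]_d) = (delta_mx i0 0 : 'cV[C]_d) *m adjmx (delta_mx i0 0).
    by rewrite adjmx_delta mul_delta_mx.
  split; first exact: psd_outer.
  by rewrite adjmx_delta mxtrace_mulC mul_delta_mx /mxtrace big_ord1 mxE !eqxx.
apply: ub_le_sup; first by exists gs.
exists ((phi *m adjmx phi) *t delta_mx i0 i0); split; first exact: tens_density.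
have := trnorm_rank1 (proj1 (tens_density dt)).
rewrite Cm_tens (proj2 dt) mulr1 -eG.
by case.
Qed.

Lemma habs_rank1 i : habs (Dm i) = `|gamma i| *: (phi *m adjmx phi).
Proof.
apply: psd_sqrt_uniq; first by apply: habs_psd.
  apply: psdZ; first exact: normr_ge0.
  exact: psd_outer.
rewrite habs_sq // hG adjmxZ adjmxM adjmxK -!scalemxAl -!scalemxAr !scalerA.
have e : phi *m adjmx phi *m (phi *m adjmx phi) = phi *m adjmx phi.
  by rewrite mulmxA -(mulmxA phi) hphi mulmx1.
by rewrite e -expr2 normCK mulrC.
Qed.

Lemma me_rank1 : d%:R * me_norm (delta_channel M N) = gs.
Proof.
have eG : Complex gs 0 = Gs by apply: complex_real; apply: Gs_ge0.
have : Complex (d%:R * me_norm (delta_channel M N)) 0 = Complex gs 0.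
  rewrite me_val eG /Gs; apply: eq_bigr=> i _.
  rewrite habs_rank1 mxtraceZ mxtrace_mulC hphi /mxtrace big_ord1 mxE eqxx mulr1.
  by [].
by case.
Qed.

End Rank1.

End Prob.

Unset Implicit Arguments.
Set Strict Implicit.

Theorem theorem3 (R : realType) (d n : nat) (hd : (0 < d)%N)
  (M N : 'I_n -> 'M[R[i]]_d) (hM : povm M) (hN : povm N) :
  (MEWC M N <->
     exists (phi : 'cV[R[i]]_d) (gamma : 'I_n -> R[i]),
       adjmx phi *m phi = 1%:M /\
       forall i, M i - N i = gamma i *: (phi *m adjmx phi))
  /\
  (forall (phi : 'cV[R[i]]_d) (gamma : 'I_n -> R[i]),
     adjmx phi *m phi = 1%:M ->
     (forall i, M i - N i = gamma i *: (phi *m adjmx phi)) ->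
     (exists i, M i != N i) ->
     forall rho : 'M[R[i]]_(d * d), densitymx rho ->
       (trnorm (tensI (delta_channel M N) rho) = diamond_norm (delta_channel M N)
        <-> exists tau : 'M[R[i]]_d, densitymx tau /\
              rho = (phi *m adjmx phi) *t tau)).
Proof.
have hD : forall i, adjmx (Dm M N i) = Dm M N i.
  move=> i; rewrite /Dm adjmxB !psd_herm //; [case: hN => h _ | case: hM => h _]; exact: h.
split.
  split; first by move=> h; apply: (mewc_to hD hd h).
  move=> [phi [gamma [hp hg]]].
  by rewrite /MEWC (diamond_rank1 hd hp hg) (me_rank1 hD hd hp hg).
move=> phi gamma hp hg [i0 ne] rho dr.
rewrite (diamond_rank1 hd hp hg).
have eG : Complex (gs gamma) 0 = Gs gamma by apply: complex_real; apply: Gs_ge0.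
have G0 : Gs gamma != 0.
  rewrite /Gs; apply/negP=> /eqP /psumr_eq0P h.
  have := h (fun i _ => normr_ge0 (gamma i)) i0 isT; move/eqP; rewrite normr_eq0 => /eqP g0.
  by move: ne; rewrite -subr_eq0 hg g0 scale0r eqxx.
split.
  move=> e.
  have t1 : \tr (Cm phi rho) = 1.
    have := trnorm_rank1 hg (proj1 dr); rewrite e eG.
    by move=> /esym; rewrite -{2}(mulr1 (Gs gamma)) => /(mulfI G0).
  exists (Cm phi rho); split; first by split; [apply: Cm_psd; case: dr | exact: t1].
  exact: (tC_eq1 hp dr t1).
move=> [tau [dt er]].
have := trnorm_rank1 hg (proj1 dr).
rewrite {2}er (Cm_tens hp) (proj2 dt) mulr1 -eG.
by case.
Qed.
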